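(* Let $N\ge 2$ be an integer and index rows and columns of $N\times N$ matrices by $0,1,\dots,N-1$. Let $H$ be the complex symmetric tridiagonal $N\times N$ matrix with diagonal entries $H_{n,n}={\rm i}\,(2n-N+1)$ for $n=0,\dots,N-1$ and off-diagonal entries $H_{n-1,n}=H_{n,n-1}=\sqrt{n(N-n)}$ for $n=1,\dots,N-1$ (all other entries zero). Let $J$ be the $N\times N$ nilpotent Jordan block, $J_{n,n+1}=1$ for $n=0,\dots,N-2$ and all other entries zero. Define the diagonal matrices $D$, $G$ and the matrix $P$ by $$D_{n,n}={\rm i}^n\sqrt{\binom{N-1}{n}},\qquad G_{n,n}=(-{\rm i})^{N-n-1}\,(N-1-n)!,\qquad P_{m,q}=\binom{N-1-m}{q}\quad (n,m,q=0,\dots,N-1),$$ with the convention $\binom{a}{b}=0$ for $b>a$. Then $Q:=D\,P\,G$ is invertible and satisfies $H\,Q=Q\,J$, i.e. $Q^{-1}HQ=J$.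
   Context: $H$ is the Bose–Hubbard Hamiltonian $H^{(N)}_{(BH)}(z)$ evaluated at its exceptional point $z=1$; $Q$ is called the transition matrix (it brings $H$ to the Jordan block with eigenvalue $0$). *)

(* Defs.v *)
From HB Require Import structures.
From mathcomp Require Import all_boot all_order all_algebra.
Set Implicit Arguments. Unset Strict Implicit. Unset Printing Implicit Defensive.
Import Order.TTheory GRing.Theory Num.Theory.
Local Open Scope ring_scope.

Section BH.
Variables (C : numClosedFieldType) (N : nat).

Definition BH_H : 'M[C]_N := \matrix_(i < N, j < N)
  if i == j then 'i * ((2 * i + 1)%:R - N%:R)
  else if j == i.+1 :> nat then sqrtC ((j * (N - j))%N%:R)
  else if i == j.+1 :> nat then sqrtC ((i * (N - i))%N%:R)
  else 0.

Definition BH_J : 'M[C]_N := \matrix_(i < N, j < N) ((j == i.+1 :> nat)%:R).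

Definition BH_D : 'M[C]_N := \matrix_(i < N, j < N)
  if i == j then 'i ^+ i * sqrtC ('C(N.-1, i))%:R else 0.

Definition BH_G : 'M[C]_N := \matrix_(i < N, j < N)
  if i == j then (- 'i) ^+ (N - i - 1) * ((N - 1 - i)`!)%:R else 0.

(* nat binomial 'C(a,b) is 0 when b > a *)
Definition BH_P : 'M[C]_N := \matrix_(m < N, q < N) ('C(N - 1 - m, q))%:R.

Definition BH_Q : 'M[C]_N := BH_D *m BH_P *m BH_G.

End BH.

(* Main.v *)
Require Import Defs.
From HB Require Import structures.
From mathcomp Require Import all_boot all_order all_algebra.
From mathcomp Require Import zify ring.
Import Order.TTheory GRing.Theory Num.Theory.
Local Open Scope ring_scope.

Lemma sum_delta (C : numClosedFieldType) n (f : nat -> C) j :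
  \sum_(k < n) (k == j :> nat)%:R * f k = if (j < n)%N then f j else 0.
Proof.
case: ltnP => hj.
  rewrite (bigD1 (Ordinal hj)) //= eqxx mul1r big1 ?addr0 // => k hk.
  have /negbTE -> : (k : nat) != j.
    by apply: contra hk => /eqP h; apply/eqP/val_inj.
  by rewrite mul0r.
rewrite big1 // => k _.
have /negbTE -> : (k : nat) != j by apply/eqP => h; move: (ltn_ord k); lia.
by rewrite mul0r.
Qed.

Lemma sum_tri (C : numClosedFieldType) n (f : nat -> C) i : (i < n)%N ->
  (forall k, (k < n)%N -> k != i -> k != i.+1 -> k.+1 != i -> f k = 0) ->
  \sum_(k < n) f k = f i + (if (i.+1 < n)%N then f i.+1 else 0)
     + (if (0 < i)%N then f i.-1 else 0).
Proof.
move=> hi hf.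
transitivity (\sum_(k < n) ((k == i :> nat)%:R * f k + (k == i.+1 :> nat)%:R * f k
   + (k.+1 == i :> nat)%:R * f k)).
  apply: eq_bigr => k _.
  have [e1|e1] := eqVneq (k : nat) i.
    have /negbTE -> : (k:nat) != i.+1 by apply/eqP; lia.
    have /negbTE -> : (k:nat).+1 != i by apply/eqP; lia.
    by rewrite mul1r !mul0r !addr0.
  have [e2|e2] := eqVneq (k : nat) i.+1.
    have /negbTE -> : (k:nat).+1 != i by apply/eqP; lia.
    by rewrite mul1r !mul0r addr0 add0r.
  have [e3|e3] := eqVneq (k : nat).+1 i.
    by rewrite mul1r !mul0r !add0r.
  by rewrite hf // !mulr0 !addr0.
rewrite !big_split /= !sum_delta hi.
case: i hi {hf} => [|i] hi /=.
  by rewrite big1 ?addr0 // => k _; rewrite mul0r.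
congr (_ + _); rewrite (eq_bigr (fun k : 'I_n => (k == i :> nat)%:R * f k)) ?sum_delta ?(ltnW hi) // => k _; by rewrite eqSS.
Qed.

Lemma unit_trig (C : numClosedFieldType) n (A : 'M[C]_n) :
  is_trig_mx A -> (forall i, A i i != 0) -> A \in unitmx.
Proof.
move=> hA hd; rewrite unitmxE det_trig // unitfE.
by apply/prodf_neq0 => i _; apply: hd.
Qed.
Definition Qf (C : numClosedFieldType) (N k q : nat) : C :=
  'i ^+ k * sqrtC ('C(N.-1, k))%:R * ('C(N - 1 - k, q))%:R *
  ((- 'i) ^+ (N - q - 1) * ((N - 1 - q)`!)%:R).

Lemma Q_E (C : numClosedFieldType) N (m q : 'I_N) : BH_Q C N m q = Qf C N m q.
Proof.
rewrite /BH_Q mxE (bigD1 q) //= big1 ?addr0; last first.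
  by move=> k hk; rewrite [BH_G _ _ k q]mxE (negbTE hk) mulr0.
rewrite mxE (bigD1 m) //= big1 ?addr0; last first.
  by move=> k hk; rewrite [BH_D _ _ m k]mxE eq_sym (negbTE hk) mul0r.
rewrite !mxE !eqxx /Qf. by [].
Qed.

Definition Rv (C : numClosedFieldType) N : 'M[C]_N :=
  \matrix_(i < N, j < N) ((i + j == N.-1)%N%:R).

Lemma Rv_delta N (i k : 'I_N) : (i + k == N.-1)%N = (k == N.-1 - i :> nat)%N.
Proof. move: (ltn_ord i) (ltn_ord k) => hi hk; apply/eqP/eqP; lia. Qed.

Lemma Rv_unit (C : numClosedFieldType) N : Rv C N \in unitmx.
Proof.
suff h : Rv C N *m Rv C N = 1%:M by case: (mulmx1_unit h).
apply/matrixP => i j; rewrite !mxE.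
under eq_bigr do rewrite !mxE Rv_delta.
rewrite (eq_bigr (fun k : 'I_N => (k == (N.-1 - i)%N :> nat)%:R * (((N.-1 - i) + j == N.-1)%N)%:R)); last first.
  by move=> k _; case: eqP => [->|]; rewrite ?mul0r.
rewrite (@sum_delta _ _ (fun=> (((N.-1 - i) + j == N.-1)%N)%:R) _).
move: (ltn_ord i) (ltn_ord j) => hi hj.
have -> : (N.-1 - i < N)%N by lia.
congr (_ %:R); case: (eqVneq i j) => [->|hne]; [apply/eqP; lia | idtac]. case: eqP => // h; move: hne; rewrite (_ : i = j) ?eqxx //; apply/val_inj => /=; lia.
Qed.

Lemma P_unit (C : numClosedFieldType) N : BH_P C N \in unitmx.
Proof.
suff : Rv C N *m BH_P C N \in unitmx by rewrite unitmx_mul => /andP[].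
have E : forall i j : 'I_N, (Rv C N *m BH_P C N) i j = ('C(i, j))%:R.
  move=> i j; rewrite mxE.
  under eq_bigr do rewrite !mxE Rv_delta.
  rewrite (eq_bigr (fun k : 'I_N => (k == (N.-1 - i)%N :> nat)%:R * ('C(N - 1 - (N.-1 - i), j)%N)%:R)); last first.
    by move=> k _; case: eqP => [->|]; rewrite ?mul0r.
  rewrite (@sum_delta _ _ (fun=> ('C(N - 1 - (N.-1 - i), j)%N)%:R) _).
  move: (ltn_ord i) (ltn_ord j) => hi hj.
  have -> : (N.-1 - i < N)%N by lia.
  by have -> : (N - 1 - (N.-1 - i) = i)%N by lia.
apply: unit_trig.
  by apply/is_trig_mxP => i j hij; rewrite E bin_small.
by move=> i; rewrite E binn oner_eq0.
Qed.

Lemma D_unit (C : numClosedFieldType) N : BH_D C N \in unitmx.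
Proof.
apply: unit_trig.
  by apply/is_trig_mxP => i j hij; rewrite mxE (_ : (i == j) = false) //; apply/eqP => h; move: hij; rewrite h ltnn.
move=> i; rewrite mxE eqxx mulf_neq0 ?expf_neq0 ?neq0Ci // sqrtC_eq0 pnatr_eq0 -lt0n bin_gt0.
by move: (ltn_ord i); lia.
Qed.

Lemma G_unit (C : numClosedFieldType) N : BH_G C N \in unitmx.
Proof.
apply: unit_trig.
  by apply/is_trig_mxP => i j hij; rewrite mxE (_ : (i == j) = false) //; apply/eqP => h; move: hij; rewrite h ltnn.
by move=> i; rewrite mxE eqxx mulf_neq0 ?expf_neq0 ?oppr_eq0 ?neq0Ci // pnatr_eq0 -lt0n fact_gt0.
Qed.

Lemma Q_unit (C : numClosedFieldType) N : BH_Q C N \in unitmx.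
Proof. by rewrite /BH_Q !unitmx_mul D_unit P_unit G_unit. Qed.

Lemma nat_id m a q N : (m + a).+1 = N ->
  (m * 'C(a, q) + a * 'C(a.-1, q) + (0 < q) * ((N - q) * 'C(a, q.-1)) =
   a * 'C(a, q) + m * 'C(a.+1, q))%N.
Proof.
move=> hN; case: q => [|p].
  by rewrite !bin0 /=; lia.
rewrite binS /=.
have h1 := mul_bin_down a p.+1.
have h2 := mul_bin_left a p.
case: (ltnP p a) => hp.
  have e1 : (a - p.+1 + p.+1 = a)%N by lia.
  have e2 : (N - p.+1 = m + (a - p))%N by lia.
  rewrite h1 e2 mulnDl -h2.
  have e3 : ((a - p.+1) * 'C(a, p.+1) + p.+1 * 'C(a, p.+1) = a * 'C(a, p.+1))%N.
    by rewrite -mulnDl e1.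
  lia.
rewrite h1 (@bin_small a p.+1) ?muln0 ?addn0 ?add0n; last lia.
case: (ltnP a p) => hp2; first by rewrite bin_small // !muln0.
have -> : p = a by lia.
rewrite binn; lia.
Qed.

Lemma sqrt_sq (C : numClosedFieldType) (c y x : nat) : x = (c ^ 2 * y)%N ->
  sqrtC (x%:R : C) = c%:R * sqrtC (y%:R).
Proof.
move=> ->; rewrite natrM natrX sqrtCM ?nnegrE ?ler0n ?exprn_ge0 ?ler0n //.
by rewrite sqrCK ?ler0n.
Qed.

Lemma sqrtM_nat (C : numClosedFieldType) (a b : nat) :
  sqrtC (a%:R : C) * sqrtC (b%:R) = sqrtC ((a * b)%N%:R).
Proof. by rewrite natrM sqrtCM // nnegrE ler0n. Qed.

Definition Hf (C : numClosedFieldType) (N m k : nat) : C :=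
  if m == k then 'i * ((2 * m + 1)%N%:R - N%:R)
  else if k == m.+1 then sqrtC ((k * (N - k))%N%:R)
  else if m == k.+1 then sqrtC ((m * (N - m))%N%:R)
  else 0.

Lemma H_E (C : numClosedFieldType) N (m k : 'I_N) : BH_H C N m k = Hf C N m k.
Proof. by rewrite mxE. Qed.

Lemma T3_E (C : numClosedFieldType) N m q : (m < N)%N ->
  (if (m.+1 < N)%N then Hf C N m m.+1 * Qf C N m.+1 q else 0) =
  'i * 'i ^+ m * (N.-1 - m)%N%:R * sqrtC ('C(N.-1, m))%:R *
  ('C((N - 1 - m).-1, q))%:R * ((- 'i) ^+ (N - q - 1) * ((N - 1 - q)`!)%:R).
Proof.
move=> hm; case: ifP => h; last first.
  have -> : (N.-1 - m = 0)%N by move/negbT: h; lia.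
  by rewrite !mulr0 !mul0r.
rewrite /Hf /Qf (_ : (m == m.+1) = false); last by apply/eqP; lia.
rewrite eqxx.
have hs : sqrtC ((m.+1 * (N - m.+1))%N%:R) * sqrtC ('C(N.-1, m.+1))%:R
          = (N.-1 - m)%N%:R * sqrtC ('C(N.-1, m))%:R :> C.
  rewrite sqrtM_nat; apply: sqrt_sq.
  rewrite mulnAC mul_bin_left (_ : (N - m.+1 = N.-1 - m)%N); last lia.
  by rewrite mulnAC mulnn.
have -> : (N - 1 - m.+1 = (N - 1 - m).-1)%N by lia.
move: hs.
set sx := sqrtC _; set sy := sqrtC _; set sz := sqrtC _.
move=> hs.
transitivity ((sx * sy) * ('i * 'i ^+ m * ('C((N - 1 - m).-1, q))%:R *
   ((- 'i) ^+ (N - q - 1) * ((N - 1 - q)`!)%:R))); first by rewrite exprS; ring.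
by rewrite hs; ring.
Qed.

Lemma T1_E (C : numClosedFieldType) N m q : (m < N)%N ->
  (if (0 < m)%N then Hf C N m m.-1 * Qf C N m.-1 q else 0) =
  - 'i * 'i ^+ m * m%:R * sqrtC ('C(N.-1, m))%:R *
  ('C((N - 1 - m).+1, q))%:R * ((- 'i) ^+ (N - q - 1) * ((N - 1 - q)`!)%:R).
Proof.
case: m => [|m] hm /=; first by rewrite !mulr0 !mul0r.
rewrite /Hf /Qf (_ : (m.+1 == m) = false); last by apply/eqP; lia.
rewrite (_ : (m == m.+2) = false); last by apply/eqP; lia.
rewrite eqxx.
have hs : sqrtC ((m.+1 * (N - m.+1))%N%:R) * sqrtC ('C(N.-1, m))%:R
          = m.+1%:R * sqrtC ('C(N.-1, m.+1))%:R :> C.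
  rewrite sqrtM_nat; apply: sqrt_sq.
  rewrite -mulnn -[RHS]mulnA mul_bin_left (_ : (N - m.+1 = N.-1 - m)%N); last lia.
  by rewrite mulnA.
have -> : (N - 1 - m = (N - 1 - m.+1).+1)%N by lia.
have hi : 'i ^+ m = - 'i * ('i * 'i ^+ m) :> C by rewrite mulrA mulNr mulCii opprK mul1r.
move: hs.
set sx := sqrtC _; set sy := sqrtC _; set sz := sqrtC _.
move=> hs.
transitivity ((sx * sy) * ('i ^+ m * ('C((N - 1 - m.+1).+1, q))%:R *
   ((- 'i) ^+ (N - q - 1) * ((N - 1 - q)`!)%:R))); first by ring.
by rewrite hs exprS {1}hi; ring.
Qed.

Lemma R_E (C : numClosedFieldType) N m q : (q < N)%N ->
  (if (0 < q)%N then Qf C N m q.-1 else 0) =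
  - 'i * 'i ^+ m * sqrtC ('C(N.-1, m))%:R * (0 < q)%N%:R * (N - q)%N%:R *
  ('C(N - 1 - m, q.-1))%:R * ((- 'i) ^+ (N - q - 1) * ((N - 1 - q)`!)%:R).
Proof.
case: q => [|q] hq /=; first by rewrite !mulr0 !mul0r.
rewrite /Qf.
have -> : (N - q - 1 = (N - q.+1 - 1).+1)%N by lia.
have -> : (N - 1 - q = (N - 1 - q.+1).+1)%N by lia.
have -> : (N - q.+1 = (N - 1 - q.+1).+1)%N by lia.
rewrite exprS factS natrM; ring.
Qed.

Lemma HQ_entry (C : numClosedFieldType) N (m q : 'I_N) :
  (BH_H C N *m BH_Q C N) m q = (BH_Q C N *m BH_J C N) m q.
Proof.
have hm := ltn_ord m; have hq := ltn_ord q.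
rewrite !mxE.
under eq_bigr do rewrite H_E Q_E.
rewrite (@sum_tri C N (fun k => Hf C N m k * Qf C N k q) m hm); last first.
  move=> k hk h1 h2 h3; rewrite /Hf eq_sym (negbTE h1) (negbTE h2).
  by rewrite eq_sym (negbTE h3) mul0r.
rewrite T3_E // T1_E //.
under eq_bigr do rewrite Q_E mxE.
transitivity (if (0 < q)%N then Qf C N m q.-1 else 0); last first.
  move: hq; case: (nat_of_ord q) => [|q'] hq' /=.
    by rewrite big1 // => k _; rewrite mulr0.
  rewrite (eq_bigr (fun k : 'I_N => (k == q' :> nat)%:R * Qf C N m k)); last first.
    by move=> k _; rewrite eqSS eq_sym mulrC.
  by rewrite sum_delta ltnW.
rewrite R_E // /Hf eqxx /Qf.
have hC := congr1 (fun n : nat => n%:R : C) (@nat_id m (N - 1 - m) q N ltac:(lia)).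
rewrite /= !natrD !natrM in hC.
have e' : (2 * m + 1)%N%:R + (N - 1 - m)%N%:R = m%:R + N%:R :> C.
  by rewrite -!natrD; congr (_ %:R); lia.
have -> : (N.-1 - m = N - 1 - m)%N by lia.
move: hC e'.
set e := 'i ^+ m; set s := sqrtC _; set gF := (- 'i) ^+ (N - q - 1) * _.
set Ba := ('C(N - 1 - m, q))%:R; set Bm := ('C((N - 1 - m).-1, q))%:R.
set Bp := ('C((N - 1 - m).+1, q))%:R; set Bq := ('C(N - 1 - m, q.-1))%:R.
set x := ((2 * m + 1)%N%:R : C); set y := ((N - 1 - m)%N%:R : C).
set M := (m%:R : C); set n := (N%:R : C); set b := ((0 < q)%N%:R : C).
set nq := ((N - q)%N%:R : C).
move=> hC e'.
apply/eqP; rewrite -subr_eq0; apply/eqP.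
transitivity ('i * e * s * gF * ((M * Ba + y * Bm + b * (nq * Bq) - (y * Ba + M * Bp))
   + (x + y - (M + n)) * Ba)); first ring.
by rewrite hC e' !subrr; ring.
Qed.

Theorem mainTheorem1 (C : numClosedFieldType) (N : nat) (hN : (2 <= N)%N) :
  BH_Q C N \in unitmx /\
  BH_H C N *m BH_Q C N = BH_Q C N *m BH_J C N /\
  invmx (BH_Q C N) *m BH_H C N *m BH_Q C N = BH_J C N.
Proof.
have hU := Q_unit C N.
have hE : BH_H C N *m BH_Q C N = BH_Q C N *m BH_J C N.
  by apply/matrixP => i j; apply: HQ_entry.
split => //; split => //.
by rewrite -mulmxA hE mulmxA mulVmx // mul1mx.
Qed.
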